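(* Let $\omega=\omega_0\omega_1\cdots$ be an infinite sequence over $\{b,c,d\}$ and let $n\ge1$ be such that $\omega_{n-1}=d$. Then in $G_\omega$ (indeed in $\mathrm{Aut}(\mathbf{T})$) we have $(a d_k)^{2^{n-k+1}}=1$ for every $0\le k<n$.
   Context: Let $\mathbf{T}=\{0,1\}^*$ be the rooted binary tree of finite binary strings, and $a$ the automorphism flipping the first bit of a string ($a$ fixes the empty string). For an infinite sequence $\omega$ over $\{b,c,d\}$, each $x\in\{b,c,d\}$ and each $n\ge0$, the automorphism $x_n$ is defined by $x_n(1^j)=1^j$ for all $j\ge0$, and $x_n(1^j0s)=1^j0s$ if $\omega_{n+j}=x$, $x_n(1^j0s)=1^j0a(s)$ if $\omega_{n+j}\ne x$, for all $j\ge0$ and strings $s$. In particular $d_k$ denotes the element $x_k$ for $x=d$. The generalized Grigorchuk group is $G_\omega=\langle a,b_0,c_0,d_0\rangle$. *)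

(* Defs.v *)
(* Vertices of the binary tree T = {0,1}^* are boolean
   sequences (false = 0, true = 1); automorphisms are functions on them. *)
From mathcomp Require Import all_boot.
Set Implicit Arguments. Unset Strict Implicit. Unset Printing Implicit Defensive.

Inductive letter := lb | lc | ld.

Definition letter_eqb (x y : letter) : bool :=
  match x, y with lb, lb | lc, lc | ld, ld => true | _, _ => false end.

Definition word := nat -> letter.

Definition tree_a (s : seq bool) : seq bool :=
  match s with [::] => [::] | x :: t => (~~ x) :: t end.

(* x_n, for x in {b,c,d}, relative to omega:
   x_n(1^j) = 1^j, x_n(1^j 0 s) = 1^j 0 s if omega_{n+j} = x,
   and 1^j 0 a(s) otherwise. *)
Fixpoint tree_x (omega : word) (x : letter) (n : nat) (s : seq bool)
  : seq bool :=
  match s with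
  | [::] => [::]
  | true :: t => true :: tree_x omega x n.+1 t
  | false :: t => false :: (if letter_eqb (omega n) x then t else tree_a t)
  end.

Definition tree_d (omega : word) (k : nat) := tree_x omega ld k.

(* Main.v *)
Require Import Defs.
From mathcomp Require Import all_boot.

Lemma a_inv s : tree_a (tree_a s) = s.
Proof. by case: s => //= x t; rewrite negbK. Qed.

Lemma x_inv omega l s : forall n, tree_x omega l n (tree_x omega l n s) = s.
Proof.
elim: s => [|[] t IH] n //=; first by rewrite IH.
by case: letter_eqb => //; rewrite a_inv.
Qed.

Definition F (omega : word) k := fun t => tree_a (tree_d omega k t).
Definition X (omega : word) (k : nat) := fun u : seq bool =>
  if letter_eqb (omega k) ld then u else tree_a u.
Definition G (omega : word) (k : nat) (b : bool) := fun u =>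
  if b then X omega k (tree_d omega k.+1 u) else tree_d omega k.+1 (X omega k u).

Lemma iterA omega k m b t :
  iter (2 * m) (F omega k) (b :: t) = b :: iter m (G omega k b) t.
Proof.
elim: m => [|m IH]; first by [].
rewrite mulnS addSn addSn add0n !iterS IH.
by case: (b).
Qed.

Lemma iter_nil omega k m : iter m (F omega k) [::] = [::].
Proof. by elim: m => //= m ->. Qed.

Lemma iter_d2 omega k j t : iter (2 * j) (tree_d omega k) t = t.
Proof.
elim: j => // j IH. rewrite mulnS addSn addSn add0n !iterS IH.
exact: x_inv.
Qed.

Lemma iter_conj (p q : seq bool -> seq bool) m s :
  (forall x, p (p x) = x) ->
  iter m (fun x => p (q (p x))) s = p (iter m q (p s)).
Proof.
move=> pK; elim: m => [|m IH] /=; first by rewrite pK.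
by rewrite IH pK.
Qed.

Lemma G_id omega k m b t :
  ~~ odd m ->
  (letter_eqb (omega k) ld = false -> forall s, iter m (F omega k.+1) s = s) ->
  iter m (G omega k b) t = t.
Proof.
move=> ev H.
have Hm : m = 2 * m./2.
  by rewrite -[LHS]odd_double_half (negbTE ev) add0n -mul2n.
case E: (letter_eqb (omega k) ld).
  have -> : iter m (G omega k b) t = iter m (tree_d omega k.+1) t.
    by apply: eq_iter => u; rewrite /G /X E; case: b.
  by rewrite Hm iter_d2.
have H' := H E.
case: b.
  have -> : iter m (G omega k true) t = iter m (F omega k.+1) t.
    by apply: eq_iter => u; rewrite /G /X E.
  exact: H'.
have -> : iter m (G omega k false) t =
          iter m (fun x => tree_a (F omega k.+1 (tree_a x))) t.
  by apply: eq_iter => u; rewrite /G /X /F E a_inv.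
by rewrite iter_conj ?H' ?a_inv //; exact: a_inv.
Qed.

Lemma main omega n : omega n.-1 = ld -> forall j k, k + j = n.-1 ->
  forall s, iter (2 ^ (j + 2)) (F omega k) s = s.
Proof.
move=> Hd; elim=> [|j IH] k Hk s.
  case: s => [|b t]; first exact: iter_nil.
  rewrite (_ : 2 ^ (0 + 2) = 2 * 2) // iterA G_id //.
  by move: Hk; rewrite addn0 => ->; rewrite Hd.
case: s => [|b t]; first exact: iter_nil.
rewrite addSn expnS iterA G_id //.
  by rewrite addn2 expnS oddM.
move=> _ s; apply: IH; by rewrite -Hk addSnnS.
Qed.

Theorem lemma6p2 (omega : word) (n : nat) :
  1 <= n -> omega n.-1 = ld ->
  forall k : nat, k < n ->
  forall s : seq bool,
    iter (2 ^ (n - k + 1)) (fun t => tree_a (tree_d omega k t)) s = s.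
Proof.
move=> n1 Hd k kn s.
have -> : n - k + 1 = (n.-1 - k) + 2.
  by case: n n1 kn Hd => // n' _ kn _ /=; rewrite subSn // addn2 addn1.
have HH : k + (n.-1 - k) = n.-1 by rewrite subnKC //; by case: n n1 kn {Hd}.

exact: (@main omega n Hd (n.-1 - k) k HH s).
Qed.
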